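(* A topological space $X$ is locally dense-connected if and only if $X$ is (homeomorphic to) the topological sum of a family of dense-connected spaces.
   Context: A space $Y$ is dense-connected if every dense subset of $Y$ (with the subspace topology) is connected. A space $X$ is locally dense-connected if for every $x\in X$ and every neighborhood $U$ of $x$ there is a neighborhood $V$ of $x$ with $V\subset U$ such that $V$ is dense-connected. *)

(* Defs.v *)
From HB Require Import structures.
From mathcomp Require Import all_boot all_algebra.
From mathcomp Require Import all_classical all_reals all_analysis.

Set Implicit Arguments.
Unset Strict Implicit.
Unset Printing Implicit Defensive.

Local Open Scope classical_set_scope.

(* Y is dense-connected: every dense subset of Y (with the subspace topology)
   is connected.  [connected] from MathComp-Analysis is connectedness of a set
   in its relative topology. *)
Definition dense_connected (Y : topologicalType) : Prop :=
  forall D : set Y, dense D -> connected D.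

Definition locally_dense_connected (X : topologicalType) : Prop :=
  forall (x : X) (U : set X), nbhs x U ->
    exists V : set X, [/\ nbhs x V, V `<=` U & dense_connected (set_type V)].

Definition homeomorphic (X Y : topologicalType) : Prop :=
  exists (f : X -> Y) (g : Y -> X),
    [/\ cancel f g, cancel g f, continuous f & continuous g].

(* Main.v *)
Require Import Defs.
From HB Require Import structures.
From mathcomp Require Import all_boot all_algebra.
From mathcomp Require Import all_classical all_reals all_analysis.

Local Open Scope classical_set_scope.

Definition hyper (Y : topologicalType) := forall U V : set Y,
  open U -> open V -> U !=set0 -> V !=set0 -> U `&` V !=set0.

Definition hyperin {X : topologicalType} (A : set X) := forall U V : set X,
  open U -> open V -> A `&` U !=set0 -> A `&` V !=set0 -> A `&` U `&` V !=set0.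

Lemma closure_disj {Y : topologicalType} {U V : set Y} :
  open V -> U `&` V = set0 -> closure U `&` V = set0.
Proof.
move=> oV UV; apply/seteqP; split => // x [cx Vx].
have := cx V (open_nbhs_nbhs (conj oV Vx)).
by rewrite UV => -[].
Qed.

Lemma dc_hyper {Y : topologicalType} : dense_connected Y -> hyper Y.
Proof.
move=> dc U V oU oV [u Uu] [v Vv]; apply: contrapT => nUV.
have UV : U `&` V = set0.
  by apply/seteqP; split => // x [Ux Vx]; apply: nUV; exists x.
pose Dn := U `|` ~` closure U.
have dD : dense Dn.
  move=> Op [w Ow] oO.
  case: (pselect (Op `&` U !=set0)) => [[z [Oz Uz]]|nOU].
    by exists z; split => //; left.
  have OU : U `&` Op = set0.
    by apply/seteqP; split => // x [Ux Ox]; apply: nOU; exists x.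
  have H := closure_disj oO OU.
  exists w; split => //; right => co.
  have : (closure U `&` Op) w by [].
  by rewrite H.
have := dc Dn dD U (ex_intro _ u Uu).
have E1 : exists2 C, open C & U = Dn `&` C.
  exists U => //; apply/seteqP; split => x; last by case.
  by move=> Ux; split => //; left.
have E2 : exists2 C, closed C & U = Dn `&` C.
  exists (closure U); first exact: closed_closure.
  apply/seteqP; split => x.
    by move=> Ux; split; [left|exact: subset_closure].
  by case=> -[Ux|ncx] cx.
move=> /(_ E1 E2) UD.
have H := closure_disj oV UV.
have Dv : Dn v.
  right => cv; have : (closure U `&` V) v by [].
  by rewrite H.
move: Dv; rewrite -UD => Uv.
have : (U `&` V) v by [].
by rewrite UV.
Qed.

Lemma hyper_dc {Y : topologicalType} : hyper Y -> dense_connected Y.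
Proof.
move=> hy Dn dD B [b Bb] [C1 oC1 BC1] [C2 cC2 BC2].
apply/seteqP; split; first by rewrite BC1 => x [].
move=> d Dd; apply: contrapT => nBd.
have nC2d : ~ C2 d by move=> C2d; apply: nBd; rewrite BC2.
have C1b : C1 b by move: Bb; rewrite BC1 => -[].
have [p [[C1p nC2p] Dp]] := dD _ (hy C1 (~` C2) oC1 (closed_openC cC2)
  (ex_intro _ b C1b) (ex_intro _ d nC2d)) (openI oC1 (closed_openC cC2)).
have Bp : B p by rewrite BC1.
by move: Bp; rewrite BC2 => -[].
Qed.

Lemma hyperin_hyper {X : topologicalType} {A : set X} :
  hyperin A -> hyper (set_type A).
Proof.
move=> hA U V [P1 oP1 <-] [P2 oP2 <-] [[u Au] /= P1u] [[v Av] /= P2v].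
have [x [[Ax P1x] P2x]] := hA P1 P2 oP1 oP2
  (ex_intro _ u (conj (set_mem Au) P1u)) (ex_intro _ v (conj (set_mem Av) P2v)).
by exists (@exist _ _ x (mem_set Ax)).
Qed.

Lemma hyper_hyperin {X : topologicalType} {A : set X} :
  hyper (set_type A) -> hyperin A.
Proof.
move=> h P1 P2 oP1 oP2 [x [Ax P1x]] [y [Ay P2y]].
have o1 : open (set_val @^-1` P1 : set (set_type A)) by exists P1.
have o2 : open (set_val @^-1` P2 : set (set_type A)) by exists P2.
have [[z Az] [/= P1z P2z]] := h _ _ o1 o2
  (ex_intro _ (@exist _ _ x (mem_set Ax)) P1x)
  (ex_intro _ (@exist _ _ y (mem_set Ay)) P2y).
by exists z; split; [split|]; rewrite ?set_valE //; exact: set_mem.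
Qed.
Lemma hyperin_sub {X : topologicalType} {V H : set X} :
  hyperin V -> open H -> H `<=` V -> hyperin H.
Proof.
move=> hV oH HV P1 P2 oP1 oP2 [x [Hx P1x]] [y [Hy P2y]].
have [z [[Vz [Hz P1z]] [_ P2z]]] := hV (H `&` P1) (H `&` P2) (openI oH oP1)
  (openI oH oP2) (ex_intro _ x (conj (HV _ Hx) (conj Hx P1x)))
  (ex_intro _ y (conj (HV _ Hy) (conj Hy P2y))).
by exists z.
Qed.

Lemma hyperinU {X : topologicalType} {A B : set X} :
  hyperin A -> hyperin B -> open A -> open B -> A `&` B !=set0 ->
  hyperin (A `|` B).
Proof.
move=> hA hB oA oB [c [Ac Bc]].
have claim : forall P, open P -> (A `|` B) `&` P !=set0 -> (A `&` B) `&` P !=set0.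
  move=> P oP [x [[Ax|Bx] Px]].
    have [z [[Az Pz] Bz]] := hA P B oP oB (ex_intro _ x (conj Ax Px))
      (ex_intro _ c (conj Ac Bc)).
    by exists z.
  have [z [[Bz Pz] Az]] := hB P A oP oA (ex_intro _ x (conj Bx Px))
    (ex_intro _ c (conj Bc Ac)).
  by exists z.
move=> P1 P2 oP1 oP2 h1 h2.
have [p [[Ap Bp] P1p]] := claim P1 oP1 h1.
have [q [[Aq Bq] P2q]] := claim P2 oP2 h2.
have [z [[Az [P1z Bz]] [P2z _]]] := hA (P1 `&` B) (P2 `&` B) (openI oP1 oB)
  (openI oP2 oB) (ex_intro _ p (conj Ap (conj P1p Bp)))
  (ex_intro _ q (conj Aq (conj P2q Bq))).
by exists z; split; [split; [left|]|].
Qed.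

Section Comp.
Variable X : topologicalType.
Hypothesis LH : forall x : X, exists H : set X, [/\ open H, H x & hyperin H].

Definition Cx (x : X) : set X :=
  [set y | exists H : set X, [/\ open H, H x, hyperin H & H y]].

Lemma Cx_open x : open (Cx x).
Proof.
rewrite openE => y [H [oH Hx hH Hy]].
rewrite /interior; apply: (@filterS _ _ _ H); last exact: open_nbhs_nbhs.
by move=> z Hz; exists H.
Qed.

Lemma Cx_self x : Cx x x.
Proof. by have [H [oH Hx hH]] := LH x; exists H. Qed.

Lemma Cx_sub x H : open H -> H x -> hyperin H -> H `<=` Cx x.
Proof. by move=> oH Hx hH y Hy; exists H. Qed.

Lemma Cx_hyp x : hyperin (Cx x).
Proof.
move=> P1 P2 oP1 oP2 [a [[H1 [oH1 H1x hH1 H1a]] P1a]]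
  [b [[H2 [oH2 H2x hH2 H2b]] P2b]].
have hU := hyperinU hH1 hH2 oH1 oH2 (ex_intro _ x (conj H1x H2x)).
have [z [[Hz P1z] P2z]] := hU P1 P2 oP1 oP2 (ex_intro _ a (conj (or_introl H1a) P1a))
  (ex_intro _ b (conj (or_intror H2b) P2b)).
exists z; split; [split|] => //; exists (H1 `|` H2); split => //.
- exact: openU.
- by left.
Qed.

Lemma Cx_eq x y : Cx x y -> Cx y = Cx x.
Proof.
move=> xy; apply/seteqP; split; last first.
  exact: (@Cx_sub y _ (Cx_open x) xy (Cx_hyp x)).
have hU := hyperinU (Cx_hyp x) (Cx_hyp y) (Cx_open x) (Cx_open y)
  (ex_intro _ y (conj xy (Cx_self y))).
have := @Cx_sub x _ (openU (Cx_open x) (Cx_open y)) (or_introl (Cx_self x)) hU.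
by move=> sub z Cz; apply: sub; right.
Qed.

End Comp.

Lemma sig_fib (I : choiceType) (Y : I -> topologicalType) (p : {i : I & Y i}) i :
  projT1 p = i -> exists y, p = existT Y i y.
Proof. by case: p => j y /= <-; exists y. Qed.

Theorem theorem4p17 (X : topologicalType) :
  locally_dense_connected X <->
  exists (I : choiceType) (Y : I -> topologicalType),
    (forall i, dense_connected (Y i)) /\ homeomorphic X {i : I & Y i}.
Proof.
split.
- move=> ldc.
  have LH : forall x : X, exists H, [/\ open H, H x & hyperin H].
    move=> x; have [V [nV _ dV]] := ldc x setT filterT.
    exists (interior V); split; [exact: open_interior| exact: nV |].
    have hV : hyperin V := hyper_hyperin (dc_hyper dV).
    apply: (hyperin_sub hV (open_interior V)).
    exact: interior_subset.
  pose F (A : set X) := [set y | Cx X y = A].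
  have FE : forall A y, F A y -> F A = Cx X y.
    move=> A y; rewrite /F /= => Fy; apply/seteqP; split => z /= Fz.
      by rewrite Fy -Fz; exact: Cx_self.
    by rewrite -Fy; exact: (@Cx_eq X LH y z Fz).
  pose Y := fun A : set X => (set_type (F A) : topologicalType).
  exists (set X), Y; split.
    move=> A; apply: hyper_dc; apply: hyperin_hyper.
    case: (pselect (F A !=set0)) => [[y Fy]|nF].
      by rewrite (FE _ _ Fy); exact: Cx_hyp.
    by move=> P1 P2 _ _ [z [Fz _]]; exfalso; apply: nF; exists z.
  pose f := fun x : X => existT Y (Cx X x) (@exist _ _ x (mem_set (erefl (Cx X x)))).
  pose g := fun p : {A : set X & Y A} => set_val (projT2 p).
  have fE : forall A z (h : z \in F A), f z = existT Y A (@exist _ _ z h).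
    move=> A z h; have E : Cx X z = A := set_mem h.
    move: h; rewrite -E => h.
    rewrite /f; do 2 f_equal; exact: Prop_irrelevance.
  exists f, g; split.
  + by move=> x.
  + by case=> A [y h]; rewrite /g /= (fE _ _ h).
  + apply/continuousP => W oW; rewrite openE => y Wy.
    have [Q oQ EQ] := (sigT_openP W).1 oW (Cx X y).
    rewrite /interior; apply: (@filterS _ _ _ (Q `&` Cx X y)); last first.
      apply: open_nbhs_nbhs; split; first exact: (openI oQ (Cx_open _ _)).
      split; last exact: Cx_self.
      have hy : y \in F (Cx X y) := mem_set (erefl _).
      have : (existT Y (Cx X y) @^-1` W) (@exist _ _ y hy).
        by move: Wy; rewrite /= (fE _ _ hy).
      by rewrite -EQ.
    move=> z [Qz Cz].
    have hz : z \in F (Cx X y) := mem_set (@Cx_eq X LH y z Cz).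
    rewrite /= (fE _ _ hz).
    have : (set_val @^-1` Q) (@exist _ _ z hz) by [].
    by rewrite EQ.
  + apply/continuousP => W oW; apply/sigT_openP => A.
    by exists W.
- case=> I [Y [dcY [f [g [fK gK cf cg]]]]] x U nU.
  pose i := projT1 (f x).
  pose S := [set p : {i : I & Y i} | projT1 p = i].
  have oS : open S.
    apply/sigT_openP => j.
    case: (pselect (j = i)) => [ji|nji].
      have -> : existT Y j @^-1` S = setT.
        by apply/seteqP; split => // y _.
      exact: openT.
    have -> : existT Y j @^-1` S = set0.
      by apply/seteqP; split => // y.
    exact: open0.
  have oV : open (interior U `&` f @^-1` S).
    apply: openI; first exact: open_interior.
    exact: ((continuousP f).1 cf _ oS).
  exists (interior U `&` f @^-1` S); split.
  + by apply: open_nbhs_nbhs; split.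
  + by move=> z [/interior_subset].
  + apply: hyper_dc; apply: hyperin_hyper.
    move=> P1 P2 oP1 oP2 [a [[Ua Sa] P1a]] [b [[Ub Sb] P2b]].
    have [ya Ea] := @sig_fib _ _ (f a) i Sa.
    have [yb Eb] := @sig_fib _ _ (f b) i Sb.
    pose G := g \o existT Y i.
    have cG : continuous G.
      move=> y; apply: continuous_comp; [exact: existT_continuous | exact: cg].
    have hY := dc_hyper (dcY i).
    have oW1 : open (G @^-1` (interior U `&` P1)).
      exact: ((continuousP G).1 cG _ (openI (open_interior U) oP1)).
    have oW2 : open (G @^-1` (interior U `&` P2)).
      exact: ((continuousP G).1 cG _ (openI (open_interior U) oP2)).
    have W1a : (G @^-1` (interior U `&` P1)) ya by rewrite /G /= -Ea fK.
    have W2b : (G @^-1` (interior U `&` P2)) yb by rewrite /G /= -Eb fK.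
    have [y [[Uy P1y] [_ P2y]]] := hY _ _ oW1 oW2 (ex_intro _ ya W1a)
      (ex_intro _ yb W2b).
    exists (G y); split; [split; [split|]|] => //.
    by rewrite /S /G /= gK.
Qed.
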